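(* In the setting and notation described in the context, assume the oracle is noiseless, i.e. $\mathcal{O}(x)=\nabla f(x)$ with probability 1 for all $x\in\mathcal{K}$, and suppose the step-size denominators satisfy $\Gamma^x_t\ge Q_{t-1}$ for all $t\ge 0$. Then there is an absolute constant $C>0$ such that for every $t\ge 0$ and every number $s\ge 0$, \[ f(\bar x_t)-f(x^\star)\le C\,\frac{s^{3/2}\beta(\bar r_{t+1}+d_0)^2+(\bar r_{t+1}+d_0)\left[\sqrt{\max\{\Gamma^y_t,Q_t\}}-s\sqrt{Q_t}\right]_+}{\left(\sum_{k=0}^t \bar r_k/\bar r_{t+1}\right)^2}. \]
   Context: Norms are Euclidean, $\Pi_{\mathcal K}$ is Euclidean projection onto $\mathcal K$, $[a]_+=\max\{a,0\}$. Standing assumptions: $\mathcal K\subseteq\mathbb{R}^n$ is closed and convex; $f:\mathcal K\to\mathbb R$ is convex, $G$-Lipschitz and $\beta$-smooth ($\nabla f$ is $\beta$-Lipschitz; $G$ or $\beta$ may be $+\infty$); $x^\star\in\arg\min_{x\in\mathcal K}f(x)$ exists; a stochastic gradient oracle $\mathcal O$ returns for each query $x\in\mathcal K$ a random vector with $\mathbb E\,\mathcal O(x)=\nabla f(x)$. UDoG template: given $x_0\in\mathcal K$, an iteration budget $T$, $r_\epsilon>0$ and step sizes $\eta_{x,t},\eta_{y,t}$, set $y_0=x_0$ and for $t=0,1,2,\dots$: let $\bar r_t=\max_{k\le t}\max\{\|y_k-x_0\|,\|x_k-x_0\|,r_\epsilon\}$, $\alpha_t=\sum_{k=0}^t\bar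 r_k/\bar r_t$, $w_t=\alpha_t\bar r_t$; let $\bar z_t=\frac{w_ty_t+\sum_{k=0}^{t-1}w_kx_{k+1}}{\sum_{k=0}^tw_k}$, $m_t\sim\mathcal O(\bar z_t)$, $x_{t+1}=\Pi_{\mathcal K}(y_t-\alpha_t\eta_{x,t}m_t)$; let $\bar x_t=\frac{\sum_{k=0}^tw_kx_{k+1}}{\sum_{k=0}^tw_k}$, $g_t\sim\mathcal O(\bar x_t)$, $y_{t+1}=\Pi_{\mathcal K}(y_t-\alpha_t\eta_{y,t}g_t)$. ($\bar r_{t+1}$ is given by the same formula once $x_{t+1},y_{t+1}$ are computed.) Step sizes have the form $\eta_{x,t}=\bar r_t/\sqrt{\Gamma^x_t}$, $\eta_{y,t}=\bar r_t/\sqrt{\Gamma^y_t}$ with $\Gamma^x_0\le\Gamma^y_0\le\Gamma^x_1\le\Gamma^y_1\le\cdots$ positive. Notation: $q_t=\alpha_t^2\|g_t-m_t\|^2$, $Q_t=\sum_{k=0}^tq_k$ (with $Q_{-1}=0$), $d_t=\|y_t-x^\star\|$ (so $d_0=\|x_0-x^\star\|$). *)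

(* Defs.v *)
From HB Require Import structures.
From mathcomp Require Import all_boot all_order all_algebra.
From mathcomp Require Import all_classical all_reals all_analysis.
Set Implicit Arguments. Unset Strict Implicit. Unset Printing Implicit Defensive.
Import Order.TTheory GRing.Theory Num.Theory numFieldNormedType.Exports.
Local Open Scope ring_scope.
Local Open Scope classical_set_scope.

Section UDoG.
Variables (R : realType) (n : nat).
Notation vec := 'rV[R]_n.

Definition dotv (u v : vec) : R := \sum_(i < n) u ord0 i * v ord0 i.
Definition enorm (u : vec) : R := Num.sqrt (dotv u u).

Definition convex_on (K : set vec) (f : vec -> R) : Prop :=
  forall x y, K x -> K y -> forall l : R, 0 <= l <= 1 ->
    f (l *: x + (1 - l) *: y) <= l * f x + (1 - l) * f y.

(* grad x is a (sub)gradient of f on K at x; for differentiable f this is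
   the gradient.  *)
Definition is_subgrad_on (K : set vec) (f : vec -> R) (grad : vec -> vec) :=
  forall x y, K x -> K y -> f x + dotv (grad x) (y - x) <= f y.

Definition smooth_on (K : set vec) (grad : vec -> vec) (beta : R) : Prop :=
  forall x y, K x -> K y -> enorm (grad x - grad y) <= beta * enorm (x - y).

Definition is_proj (K : set vec) (z p : vec) : Prop :=
  K p /\ forall q, K q -> enorm (z - p) <= enorm (z - q).

Definition is_minimizer (K : set vec) (f : vec -> R) (xs : vec) : Prop :=
  K xs /\ forall x, K x -> f xs <= f x.

Variables (x y : nat -> vec) (reps : R).

Definition rbar (t : nat) : R :=
  \big[Num.max/reps]_(k < t.+1)
     Num.max (enorm (y k - x 0%N)) (enorm (x k - x 0%N)).

Definition alpha (t : nat) : R := (\sum_(k < t.+1) rbar k) / rbar t.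
Definition wgt (t : nat) : R := alpha t * rbar t.

Definition zbar (t : nat) : vec :=
  (\sum_(k < t.+1) wgt k)^-1 *:
    (wgt t *: y t + \sum_(k < t) wgt k *: x k.+1).

Definition xbar (t : nat) : vec :=
  (\sum_(k < t.+1) wgt k)^-1 *: (\sum_(k < t.+1) wgt k *: x k.+1).

Variable grad : vec -> vec.

(* noiseless oracle: m_t = grad f(zbar_t), g_t = grad f(xbar_t) *)
Definition qq (t : nat) : R :=
  alpha t ^+ 2 * enorm (grad (xbar t) - grad (zbar t)) ^+ 2.

(* Qpre t = Q_{t-1} = sum_{k<t} q_k  (so Qpre 0 = Q_{-1} = 0, Q_t = Qpre t.+1) *)
Definition Qpre (t : nat) : R := \sum_(k < t) qq k.

End UDoG.

(* Main.v *)
Require Import Defs.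
From HB Require Import structures.
From mathcomp Require Import all_boot all_order all_algebra.
From mathcomp Require Import all_classical all_reals all_analysis.
From mathcomp Require Import ring lra.
Import Order.TTheory GRing.Theory Num.Theory numFieldNormedType.Exports.
Local Open Scope ring_scope.
Local Open Scope classical_set_scope.

Section S.
Variables (R : realType) (n : nat).
Notation vec := 'rV[R]_n.
Notation dot := (@dotv R n).
Notation nrm := (@enorm R n).

Lemma dotDl (a b c : vec) : dot (a + b) c = dot a c + dot b c.
Proof. rewrite /dotv -big_split; apply: eq_bigr => i _; by rewrite mxE mulrDl. Qed.
Lemma dotC (a b : vec) : dot a b = dot b a.
Proof. rewrite /dotv; apply: eq_bigr => i _; by rewrite mulrC. Qed.
Lemma dotDr (a b c : vec) : dot c (a + b) = dot c a + dot c b.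
Proof. by rewrite dotC dotDl !(dotC c). Qed.
Lemma dotZl (l : R) (a b : vec) : dot (l *: a) b = l * dot a b.
Proof. rewrite /dotv mulr_sumr; apply: eq_bigr => i _; by rewrite mxE mulrA. Qed.
Lemma dotZr (l : R) (a b : vec) : dot b (l *: a) = l * dot b a.
Proof. by rewrite dotC dotZl dotC. Qed.
Lemma dotNl (a b : vec) : dot (- a) b = - dot a b.
Proof. by rewrite -scaleN1r dotZl mulN1r. Qed.
Lemma dotNr (a b : vec) : dot b (- a) = - dot b a.
Proof. by rewrite dotC dotNl dotC. Qed.
Lemma dotBl (a b c : vec) : dot (a - b) c = dot a c - dot b c.
Proof. by rewrite dotDl dotNl. Qed.
Lemma dotBr (a b c : vec) : dot c (a - b) = dot c a - dot c b.
Proof. by rewrite dotDr dotNr. Qed.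
Lemma dot_ge0 (a : vec) : 0 <= dot a a.
Proof. by rewrite /dotv; apply: sumr_ge0 => i _; rewrite -expr2 sqr_ge0. Qed.
Lemma nrm_ge0 (a : vec) : 0 <= nrm a.
Proof. exact: sqrtr_ge0. Qed.
Lemma nrm_sq (a : vec) : nrm a ^+ 2 = dot a a.
Proof. by rewrite /enorm sqr_sqrtr // dot_ge0. Qed.

Lemma cs_sq (a b : vec) : dot a b ^+ 2 <= dot a a * dot b b.
Proof.
have key : forall l : R, 0 <= dot a a - 2 * l * dot a b + l ^+ 2 * dot b b.
  move=> l; have := dot_ge0 (a - l *: b).
  rewrite !dotBl !dotBr !dotZl !dotZr (dotC b a). move=> h. 
  by apply: le_trans h _; rewrite le_eqVlt; apply/orP; left; apply/eqP; ring.
have [bb0|bb0] := eqVneq (dot b b) 0.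
  rewrite bb0 mulr0.
  have [ab0|ab0] := eqVneq (dot a b) 0; first by rewrite ab0 expr0n.
  have := key ((dot a a + 1) / (2 * dot a b)).
  rewrite bb0 mulr0 addr0.
  have -> : 2 * ((dot a a + 1) / (2 * dot a b)) * dot a b = dot a a + 1.
    by field; rewrite ab0.
  lra.
have bpos : 0 < dot b b by rewrite lt_neqAle eq_sym bb0 dot_ge0.
have := key (dot a b / dot b b).
have -> : dot a a - 2 * (dot a b / dot b b) * dot a b + (dot a b / dot b b) ^+ 2 * dot b b
   = (dot a a * dot b b - dot a b ^+ 2) / dot b b by field; rewrite bb0.
move=> h.
have : 0 <= (dot a a * dot b b - dot a b ^+ 2) / dot b b * dot b b by apply: mulr_ge0 => //; exact: ltW.
rewrite divfK ?bb0 //; lra.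
Qed.

Lemma sq_le (u v : R) : 0 <= v -> u ^+ 2 <= v ^+ 2 -> u <= v.
Proof. move=> hv h; rewrite leNgt; apply/negP => hl; nra. Qed.

Lemma cs (a b : vec) : dot a b <= nrm a * nrm b.
Proof.
have h := cs_sq a b.
have ha := nrm_ge0 a; have hb := nrm_ge0 b.
rewrite -!nrm_sq in h.
have : dot a b ^+ 2 <= (nrm a * nrm b) ^+ 2 by rewrite exprMn.
move=> h2.
apply: sq_le => //; exact: mulr_ge0.
Qed.

Lemma nrm_tri (a b : vec) : nrm (a + b) <= nrm a + nrm b.
Proof.
have ha := nrm_ge0 a; have hb := nrm_ge0 b.
apply: sq_le; first exact: addr_ge0.
rewrite nrm_sq dotDl !dotDr (dotC b a) -!nrm_sq.
have := cs a b. nra.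
Qed.

Lemma nrmN (a : vec) : nrm (- a) = nrm a.
Proof. by rewrite /enorm dotNl dotNr opprK. Qed.

Lemma nrmB (a b : vec) : nrm (a - b) = nrm (b - a).
Proof. by rewrite -nrmN opprB. Qed.

Lemma nrmZ (l : R) (a : vec) : nrm (l *: a) = `|l| * nrm a.
Proof. by rewrite /enorm dotZl dotZr mulrA -expr2 sqrtrM ?sqr_ge0 // sqrtr_sqr. Qed.

Lemma nrm_tri3 (a b c : vec) : nrm (a - c) <= nrm (a - b) + nrm (b - c).
Proof. have -> : a - c = (a - b) + (b - c) by rewrite addrA subrK. exact: nrm_tri. Qed.


Lemma dotBZ (a b : vec) (l : R) :
  dot (a - l *: b) (a - l *: b) = dot a a - 2 * l * dot a b + l ^+ 2 * dot b b.
Proof.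
rewrite !dotBl !dotBr !dotZl !dotZr (dotC b a).
set u := dot a a; set v := dot a b; set w := dot b b. ring.
Qed.

Lemma dotD2 (a b : vec) :
  dot (a + b) (a + b) = dot a a + 2 * dot a b + dot b b.
Proof.
rewrite !dotDl !dotDr (dotC b a).
set u := dot a a; set v := dot a b; set w := dot b b. ring.
Qed.

Lemma convK (K : set vec) (a b : vec) (l : R) : convex_set K -> K a -> K b ->
  0 <= l -> l <= 1 -> K (l *: a + (1 - l) *: b).
Proof.
move=> cK Ka Kb l0 l1.
have := cK a b (Itv01 l0 l1).
by rewrite !inE => /(_ Ka Kb).
Qed.

Lemma proj_vi (K : set vec) (z p q : vec) : convex_set K -> is_proj K z p -> K q ->
  dot (z - p) (q - p) <= 0.
Proof.
move=> cK [Kp hp] Kq.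
rewrite leNgt; apply/negP => cpos.
set c := dot (z - p) (q - p) in cpos.
set N := dot (q - p) (q - p).
have N0 : 0 <= N by exact: dot_ge0.
set l := c / (c + N).
have cN : 0 < c + N by lra.
have l0 : 0 <= l by apply: divr_ge0; lra.
have l1 : l <= 1 by rewrite ler_pdivrMr // mul1r; lra.
have Kl := @convK K q p l cK Kq Kp l0 l1.
have h := hp _ Kl.
have h2 : dot (z - p) (z - p) <= dot (z - (l *: q + (1 - l) *: p)) (z - (l *: q + (1 - l) *: p)).
  rewrite -!nrm_sq; apply: lerXn2r => //; rewrite nnegrE; exact: nrm_ge0.
have e : z - (l *: q + (1 - l) *: p) = (z - p) - l *: (q - p).
  rewrite scalerBl scale1r scalerBr !opprD !opprK !addrA; congr (_ + _).
  exact: addrAC.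
move: h2; rewrite e dotBZ -/c -/N.
move=> h2.
have lpos : 0 < l by apply: divr_gt0.
have : 2 * c <= l * N.
  have h4 : l * (2 * c) <= l * (l * N) by nra.
  by rewrite ler_pM2l in h4.
rewrite /l => h3.
have : 2 * c * (c + N) <= c * N.
  by move: h3; rewrite mulrAC ler_pdivlMr //.
nra.
Qed.

Lemma proj_step (K : set vec) (yv v p q : vec) (c : R) : convex_set K ->
  is_proj K (yv - c *: v) p -> K q ->
  2 * (c * dot v (p - q)) <= dot (yv - q) (yv - q) - dot (p - q) (p - q) - dot (yv - p) (yv - p).
Proof.
move=> cK hp Kq.
have h := @proj_vi K _ _ _ cK hp Kq.
have e1 : yv - c *: v - p = (yv - p) - c *: v by rewrite addrAC.
have e2 : q - p = - (p - q) by rewrite opprB.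
have e3 : yv - q = (yv - p) + (p - q) by rewrite addrA subrK.
rewrite e1 e2 dotNr dotBl dotZl in h.
rewrite e3 dotD2.
lra.
Qed.
End S.

Section Scal.
Variable R : realType.

Lemma sqrt_lemma (h a bq c : R) : 0 <= a -> 0 <= c -> 0 <= bq -> bq ^+ 2 = a ^+ 2 + c ^+ 2 ->
  h <= 2 * c -> h * a <= c ^+ 2 / 2 -> h <= 6 * (bq - a).
Proof.
move=> a0 c0 b0 hb h1 h2.
have ba : a <= bq by apply: sq_le => //; nra.
have [hle|hgt] := lerP h 0; first by nra.
have bac : bq <= a + c by apply: sq_le; nra.
have bpos : 0 < bq + a.
  rewrite lt_neqAle; apply/andP; split; last by lra.
  apply/negP => /eqP e. have ha : a = 0 by lra. have hb0 : bq = 0 by lra.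
  rewrite ha hb0 in hb. have c2 : c > 0 by lra. nra.
have key : h * (bq + a) <= 6 * (bq - a) * (bq + a).
  have -> : 6 * (bq - a) * (bq + a) = 6 * c ^+ 2 by rewrite -mulrA -subr_sqr hb; ring.
  have [ca|ac] := lerP c a.
    have : h * (bq + a) <= h * (3 * a) by apply: ler_wpM2l; lra.
    nra.
  have : h * (bq + a) <= h * (3 * c) by apply: ler_wpM2l; lra.
  nra.
by rewrite ler_pM2r in key.
Qed.

Lemma stepA (rbk r sqk b gxk p0 p1 : R) : 0 < rbk -> rbk <= r -> 0 <= b -> b <= 2 * r ->
  0 <= sqk -> 0 < gxk -> 0 <= p0 -> 0 <= p1 -> p1 ^+ 2 = p0 ^+ 2 + sqk ^+ 2 -> p0 <= gxk ->
  rbk * sqk * b - gxk * b ^+ 2 / 2 <= 6 * r ^+ 2 * (p1 - p0).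
Proof.
move=> rb0 rbr b0 b2 sq0 g0 p00 p10 hp pg.
have r0 : 0 < r by lra.
set E := rbk * sqk * b - gxk * b ^+ 2 / 2.
have E1 : E <= 2 * sqk * r ^+ 2.
  have : rbk * sqk * b <= r * sqk * (2 * r).
    apply: ler_pM; [nra|lra|nra|lra].
  have : 0 <= gxk * b ^+ 2 / 2 by apply: divr_ge0 => //; nra.
  rewrite /E; lra.
have E2 : E * gxk <= r ^+ 2 * sqk ^+ 2 / 2.
  have : 0 <= (gxk * b - rbk * sqk) ^+ 2 by exact: sqr_ge0.
  have : rbk ^+ 2 <= r ^+ 2 by apply: lerXn2r; rewrite ?nnegrE; lra.
  rewrite /E; nra.
have r2 : 0 < r ^+ 2 by apply: exprn_gt0.
have hh : E / r ^+ 2 <= 6 * (p1 - p0).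
  apply: (@sqrt_lemma _ p0 p1 sqk) => //.
    by rewrite ler_pdivrMr //; lra.
  have [Ele|Egt] := lerP E 0.
    have : E / r ^+ 2 * p0 <= 0 by apply: mulr_le0_ge0 => //; apply: mulr_le0_ge0 => //; rewrite invr_ge0; lra.
    have : 0 <= sqk ^+ 2 / 2 by apply: divr_ge0 => //; exact: sqr_ge0.
    lra.
  have e1 : E / r ^+ 2 * p0 <= E / r ^+ 2 * gxk.
    by apply: ler_wpM2l => //; apply: divr_ge0; lra.
  apply: le_trans e1 _.
  rewrite mulrAC ler_pdivrMr //.
  lra.
by move: hh; rewrite ler_pdivrMr // => hh; lra.
Qed.


Lemma stepB (rbk r sqk b gxk p0 p1 aa beta c4 lam : R) : 0 < rbk -> rbk <= r -> 0 <= b -> b <= 2 * r ->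
  0 <= sqk -> 0 < gxk -> 0 <= p0 -> 0 <= p1 -> p1 ^+ 2 = p0 ^+ 2 + sqk ^+ 2 -> p0 <= gxk ->
  0 <= aa -> aa <= 2 * r -> 0 <= beta -> sqk <= 2 * beta * aa -> 0 <= c4 -> 0 <= lam ->
  8 * beta ^+ 2 * (6 * r ^+ 2 + c4) <= lam ^+ 2 ->
  rbk * sqk * b - gxk * (b ^+ 2 + aa ^+ 2) / 2 + c4 * (p1 - p0) <=
  (6 * r ^+ 2 + c4) * (Num.min p1 (lam + 4 * beta * r) - Num.min p0 (lam + 4 * beta * r)).
Proof.
move=> rb0 rbr b0 b2 sq0 g0 p00 p10 hp pg a0 a2 be0 sqa c40 lam0 hlam.
have hA := stepA _ _ _ _ _ _ _ rb0 rbr b0 b2 sq0 g0 p00 p10 hp pg.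
set A := 6 * r ^+ 2 + c4.
have A0 : 0 <= A by rewrite /A; nra.
have E1 : rbk * sqk * b - gxk * (b ^+ 2 + aa ^+ 2) / 2 + c4 * (p1 - p0)
   <= A * (p1 - p0) - gxk * aa ^+ 2 / 2.
  rewrite /A; lra.
apply: le_trans E1 _.
have p01 : p0 <= p1 by apply: sq_le => //; nra.
have [hl|hl] := lerP lam p0.
  have mono : 0 <= A * (Num.min p1 (lam + 4 * beta * r) - Num.min p0 (lam + 4 * beta * r)).
    apply: mulr_ge0 => //; rewrite subr_ge0.
    by rewrite le_min !ge_min p01 lexx /= !orbT.
  apply: le_trans mono.
  rewrite subr_le0.
  have k1 : A * sqk ^+ 2 <= p0 ^+ 2 * aa ^+ 2 / 2.
    have s2 : sqk ^+ 2 <= (2 * beta * aa) ^+ 2 by apply: lerXn2r; rewrite ?nnegrE //; nra.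
    have l2 : lam ^+ 2 <= p0 ^+ 2 by apply: lerXn2r; rewrite ?nnegrE.
    have t1 : A * sqk ^+ 2 <= A * (2 * beta * aa) ^+ 2 by apply: ler_wpM2l.
    have t2 : 8 * beta ^+ 2 * A * aa ^+ 2 <= p0 ^+ 2 * aa ^+ 2.
      by apply: ler_wpM2r; [exact: sqr_ge0 | rewrite /A; lra].
    have e : A * (2 * beta * aa) ^+ 2 = 8 * beta ^+ 2 * A * aa ^+ 2 / 2 by field.
    lra.
  have [z|nz] := eqVneq (p1 + p0) 0.
    have -> : p1 = p0 by lra.
    rewrite subrr mulr0; apply: divr_ge0 => //; nra.
  have pp : 0 < p1 + p0 by rewrite lt_neqAle eq_sym nz /=; lra.
  have : A * (p1 - p0) * (p1 + p0) <= gxk * aa ^+ 2 / 2 * (p1 + p0).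
    have -> : A * (p1 - p0) * (p1 + p0) = A * sqk ^+ 2 by rewrite -mulrA -subr_sqr hp; ring.
    apply: le_trans k1 _.
    have q1 : p0 * (p1 + p0) <= gxk * (p1 + p0) by apply: ler_wpM2r; lra.
    have q2 : p0 ^+ 2 <= gxk * (p1 + p0) by nra.
    have q3 : 0 <= aa ^+ 2 / 2 by apply: divr_ge0 => //; exact: sqr_ge0.
    have := ler_wpM2r q3 q2.
    have -> : p0 ^+ 2 * (aa ^+ 2 / 2) = p0 ^+ 2 * aa ^+ 2 / 2 by rewrite mulrA.
    have -> : gxk * (p1 + p0) * (aa ^+ 2 / 2) = gxk * aa ^+ 2 / 2 * (p1 + p0) by field.
    done.
  by rewrite ler_pM2r.
have h1 : p1 <= lam + 4 * beta * r.
  have : p1 <= p0 + sqk by apply: sq_le; nra.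
  nra.
have h0 : p0 <= lam + 4 * beta * r by nra.
rewrite (min_l h1) (min_l h0).
have : 0 <= gxk * aa ^+ 2 / 2 by apply: divr_ge0 => //; nra.
lra.
Qed.


Lemma tele_c (c e : nat -> R) (B : R) t : (forall k, c k <= c k.+1) -> (forall k, 0 <= c k) ->
  (forall k, (k <= t.+1)%N -> e k <= B) ->
  \sum_(k < t.+1) c k * (e k - e k.+1) + c t * e t.+1 <= c t * B.
Proof.
move=> cm c0; elim: t => [|t IH] hB.
  rewrite big_ord1; have := hB 0%N isT; have := c0 0%N.
  move=> h1 h2; have := ler_wpM2l h1 h2; lra.
rewrite big_ord_recr /=.
have IH' := IH (fun k hk => hB k (leqW hk)).
have e1 := hB t.+2 (leqnn _).
have e2 := hB t.+1 (leqW (leqnn _)).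
have := cm t; have := c0 t.
move=> h1 h2.
have : (c t.+1 - c t) * e t.+1 <= (c t.+1 - c t) * B by apply: ler_wpM2l; lra.
lra.
Qed.

Lemma tele_sum (F : nat -> R) t : \sum_(k < t.+1) (F k.+1 - F k) = F t.+1 - F 0%N.
Proof.
elim: t => [|t IH]; first by rewrite big_ord1.
by rewrite big_ord_recr /= IH addrC addrA subrK.
Qed.

Lemma final_scalar (F W S r X Rg : R) : 0 < r -> 0 < S -> 0 < W ->
  S ^+ 2 <= 2 * r * W -> 0 <= X -> W * F <= Rg -> Rg <= 320 * r * X ->
  F <= 1000 * X / (S / r) ^+ 2.
Proof.
move=> r0 S0 W0 SW X0 ho hR.
have -> : 1000 * X / (S / r) ^+ 2 = 1000 * X * r ^+ 2 / S ^+ 2.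
  by rewrite expr_div_n; field; rewrite !gt_eqF.
have S2 : 0 < S ^+ 2 by apply: exprn_gt0.
rewrite ler_pdivlMr; last exact: S2.
have r2 : 0 <= r ^+ 2 := sqr_ge0 r.
have Xr : 0 <= X * r ^+ 2 by apply: mulr_ge0.
have [Fle|Fgt] := lerP F 0.
  have : F * S ^+ 2 <= 0 by apply: mulr_le0_ge0; [exact: Fle | exact: ltW].
  lra.
have k1 : F * S ^+ 2 <= F * (2 * r * W) by apply: ler_wpM2l; [exact: ltW | exact: SW].
have k3 : (2 * r) * (W * F) <= (2 * r) * (320 * r * X).
  apply: ler_wpM2l; first by lra. lra.
have k2 : F * (2 * r * W) = 2 * r * (W * F) by ring.
have k4 : 2 * r * (320 * r * X) = 640 * (X * r ^+ 2) by ring.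
lra.
Qed.

End Scal.

Section Main.
Variables (R : realType) (n : nat).
Notation vec := 'rV[R]_n.
Notation dot := (@dotv R n).
Notation nrm := (@enorm R n).
Variables (x y : nat -> vec) (reps : R).
Hypothesis reps0 : 0 < reps.

Notation rb := (rbar x y reps).
Notation al := (alpha x y reps).
Notation w := (wgt x y reps).
Notation xb := (xbar x y reps).
Notation zb := (zbar x y reps).

Lemma bigmax_recl (m : nat) (r : R) (F : nat -> R) :
  \big[Num.max/r]_(k < m.+1) F k = Num.max (F 0%N) (\big[Num.max/r]_(k < m) F k.+1).
Proof. by rewrite big_ord_recl; congr (Num.max _ _); apply: eq_bigr => i _; rewrite lift0. Qed.

Lemma bigmax_props (m : nat) (r : R) (F : nat -> R) :
  r <= \big[Num.max/r]_(k < m) F k /\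
  forall k, (k < m)%N -> F k <= \big[Num.max/r]_(k < m) F k.
Proof.
elim: m F => [|m IH] F; first by rewrite big_ord0; split => // k.
have [IH1 IH2] := IH (fun k => F k.+1).
rewrite bigmax_recl; split.
  by apply: le_trans IH1 _; rewrite le_max lexx orbT.
case=> [|k] hk; first by rewrite le_max lexx.
by apply: le_trans (IH2 k hk) _; rewrite le_max lexx orbT.
Qed.

Lemma bigmax_S (m : nat) (r : R) (F : nat -> R) :
  \big[Num.max/r]_(k < m) F k <= \big[Num.max/r]_(k < m.+1) F k.
Proof.
elim: m F => [|m IH] F.
  by rewrite bigmax_recl !big_ord0 le_max lexx orbT.
rewrite bigmax_recl [X in _ <= X]bigmax_recl.
by rewrite ge_max le_max lexx /= le_max (IH (fun k => F k.+1)) !orbT.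
Qed.

Lemma rb_ge (k : nat) : reps <= rb k.
Proof. by have [h _] := bigmax_props k.+1 reps (fun k => Num.max (nrm (y k - x 0%N)) (nrm (x k - x 0%N))). Qed.

Lemma rb_gt0 (k : nat) : 0 < rb k.
Proof. exact: lt_le_trans reps0 (rb_ge k). Qed.

Lemma rb_y (k : nat) : nrm (y k - x 0%N) <= rb k.
Proof.
have [_ h] := bigmax_props k.+1 reps (fun k => Num.max (nrm (y k - x 0%N)) (nrm (x k - x 0%N))).
have h' := h k (ltnSn k); apply: le_trans h'; by rewrite /= le_max lexx.
Qed.

Lemma rb_x (k : nat) : nrm (x k - x 0%N) <= rb k.
Proof.
have [_ h] := bigmax_props k.+1 reps (fun k => Num.max (nrm (y k - x 0%N)) (nrm (x k - x 0%N))).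
have h' := h k (ltnSn k); apply: le_trans h'; by rewrite /= le_max lexx orbT.
Qed.

Lemma rb_S (k : nat) : rb k <= rb k.+1.
Proof. exact: (bigmax_S k.+1 reps (fun k => Num.max (nrm (y k - x 0%N)) (nrm (x k - x 0%N)))). Qed.

Lemma rb_mono (k m : nat) : (k <= m)%N -> rb k <= rb m.
Proof.
move=> /subnK <-; elim: (m - k)%N => [|d IH]; first by rewrite add0n.
by apply: le_trans IH (rb_S _).
Qed.

Definition S k := \sum_(j < k.+1) rb j.
Definition W k := \sum_(j < k.+1) w j.

Lemma S_gt0 k : 0 < S k.
Proof. by rewrite /S big_ord_recr /=; apply: ltr_wpDl; [apply: sumr_ge0 => i _; exact: ltW (rb_gt0 _)| exact: rb_gt0]. Qed.

Lemma w_S k : w k = S k.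
Proof. by rewrite /wgt /alpha divfK // gt_eqF // rb_gt0. Qed.

Lemma W_S k : W k = \sum_(j < k.+1) S j.
Proof. by apply: eq_bigr => j _; rewrite w_S. Qed.

Lemma w_gt0 k : 0 < w k.
Proof. by rewrite w_S S_gt0. Qed.

Lemma W_gt0 k : 0 < W k.
Proof. by rewrite /W big_ord_recr /=; apply: ltr_wpDl; [apply: sumr_ge0 => i _; exact: ltW (w_gt0 _)| exact: w_gt0]. Qed.

Lemma S_rec k : S k.+1 = S k + rb k.+1.
Proof. by rewrite /S big_ord_recr. Qed.
Lemma W_rec k : W k.+1 = W k + w k.+1.
Proof. by rewrite /W big_ord_recr. Qed.

Lemma S2_W k : S k ^+ 2 <= 2 * rb k * W k.
Proof.
elim: k => [|k IH].
  rewrite /S /W !big_ord1 w_S /S big_ord1.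
  have := rb_gt0 0; nra.
rewrite S_rec W_rec w_S S_rec.
have h1 := rb_S k; have h2 := rb_gt0 k; have h3 := W_gt0 k; have h4 := S_gt0 k.
nra.
Qed.


Definition V k := \sum_(j < k.+1) w j *: x j.+1.

Lemma WV k : W k *: xb k = V k.
Proof. by rewrite /xbar -/(W k) -/(V k) scalerA divff ?scale1r // gt_eqF // W_gt0. Qed.

Lemma V_rec k : V k.+1 = V k + w k.+1 *: x k.+2.
Proof. by rewrite /V big_ord_recr. Qed.

Lemma W0 : W 0 = w 0.
Proof. by rewrite /W big_ord1. Qed.

Lemma xb0 : xb 0 = x 1%N.
Proof. by rewrite /xbar big_ord1 big_ord1 scalerA mulVf ?scale1r // gt_eqF // w_gt0. Qed.

Lemma zb0 : zb 0 = y 0%N.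
Proof. by rewrite /zbar big_ord0 addr0 big_ord1 scalerA mulVf ?scale1r // gt_eqF // w_gt0. Qed.

Lemma WzbS k : W k.+1 *: zb k.+1 = w k.+1 *: y k.+1 + V k.
Proof. by rewrite /zbar -/(W k.+1) scalerA divff ?scale1r // gt_eqF // W_gt0. Qed.

Lemma xb_zb k : xb k - zb k = (w k / W k) *: (x k.+1 - y k).
Proof.
have hW : W k != 0 by rewrite gt_eqF // W_gt0.
apply: (@scalerI _ _ (W k)) => //.
rewrite scalerBr WV /zbar -/(W k) scalerA divff // scale1r scalerA mulrCA divff // mulr1.
rewrite /V big_ord_recr /= scalerBr (addrC (w k *: y k)) opprD addrACA subrr add0r //.
Qed.


Variables (K : set vec) (f : vec -> R) (grad : vec -> vec) (Gx Gy : nat -> R) (u : vec).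
Hypotheses (cK : convex_set K) (hsub : is_subgrad_on K f grad) (Ku : K u)
  (Kx0 : K (x 0%N)) (y0 : y 0%N = x 0%N)
  (hG : forall t, 0 < Gx t /\ Gx t <= Gy t /\ Gy t <= Gx t.+1)
  (hx : forall t, is_proj K
       (y t - (al t * (rb t / Num.sqrt (Gx t))) *: grad (zb t)) (x t.+1))
  (hy : forall t, is_proj K
       (y t - (al t * (rb t / Num.sqrt (Gy t))) *: grad (xb t)) (y t.+1)).

Lemma Kx k : K (x k).
Proof. by case: k => [|k] //; case: (hx k). Qed.
Lemma Ky k : K (y k).
Proof. by case: k => [|k]; [rewrite y0 | case: (hy k)]. Qed.

Lemma Kcomb (a b : vec) (l1 l2 : R) : 0 < l1 -> 0 < l2 -> K a -> K b ->
  K ((l1 + l2)^-1 *: (l1 *: a + l2 *: b)).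
Proof.
move=> h1 h2 Ka Kb.
have hs : l1 + l2 != 0 by rewrite gt_eqF // addr_gt0.
have l0 : 0 <= l1 / (l1 + l2) by apply: divr_ge0; lra.
have l1' : l1 / (l1 + l2) <= 1 by rewrite ler_pdivrMr ?addr_gt0 // mul1r; lra.
have := @convK R n K a b _ cK Ka Kb l0 l1'.
have -> : 1 - l1 / (l1 + l2) = l2 / (l1 + l2) by field.
by rewrite scalerDr !scalerA (mulrC _ l1) (mulrC _ l2).
Qed.

Lemma Kxb k : K (xb k).
Proof.
elim: k => [|k IH]; first by rewrite xb0; exact: Kx.
have e : xb k.+1 = (W k + w k.+1)^-1 *: (W k *: xb k + w k.+1 *: x k.+2).
  by rewrite /xbar -/(W k.+1) -/(V k.+1) W_rec V_rec WV.
by rewrite e; apply: Kcomb => //; [exact: W_gt0 | exact: w_gt0 | exact: Kx].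
Qed.

Lemma Kzb k : K (zb k).
Proof.
case: k => [|k]; first by rewrite zb0; exact: Ky.
have e : zb k.+1 = (w k.+1 + W k)^-1 *: (w k.+1 *: y k.+1 + W k *: xb k).
  have hW : W k.+1 != 0 by rewrite gt_eqF // W_gt0.
  apply: (@scalerI _ _ (W k.+1)) => //.
  by rewrite WzbS scalerA (addrC (w k.+1)) -W_rec divff // scale1r WV.
by rewrite e; apply: Kcomb => //; [exact: w_gt0 | exact: W_gt0 | exact: Ky | exact: Kxb].
Qed.

Lemma otb t : W t * (f (xb t) - f u) <= \sum_(k < t.+1) w k * dot (grad (xb k)) (x k.+1 - u).
Proof.
elim: t => [|t IH].
  rewrite W0 big_ord1 xb0; apply: ler_wpM2l; first exact: ltW (w_gt0 0).
  have := hsub _ _ (Kx 1) Ku; rewrite dotBr dotBr; lra.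
rewrite big_ord_recr /= W_rec.
set g := grad (xb t.+1).
have s1 := hsub _ _ (Kxb t.+1) (Kxb t); have s2 := hsub _ _ (Kxb t.+1) Ku.
rewrite -/g dotBr in s1; rewrite -/g dotBr in s2.
have e : W t.+1 * dot g (xb t.+1) = W t * dot g (xb t) + w t.+1 * dot g (x t.+2).
  by rewrite -!dotZr -dotDr WV V_rec WV.
rewrite W_rec in e.
rewrite dotBr.
have hW := W_gt0 t; have hw := w_gt0 t.+1.
nra.
Qed.


Definition gx k := Num.sqrt (Gx k).
Definition gy k := Num.sqrt (Gy k).
Definition d k := nrm (y k - u).
Definition aa k := nrm (x k.+1 - y k).
Definition bb k := nrm (x k.+1 - y k.+1).
Definition sq k := al k * nrm (grad (xb k) - grad (zb k)).

Lemma gx_gt0 k : 0 < gx k.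
Proof. by rewrite /gx sqrtr_gt0; case: (hG k). Qed.
Lemma gx_le_gy k : gx k <= gy k.
Proof. by rewrite /gx /gy ler_sqrt; case: (hG k) => h [h1 h2]; lra. Qed.
Lemma gy_S k : gy k <= gy k.+1.
Proof.
rewrite /gy ler_sqrt; case: (hG k) => h [h1 h2]; case: (hG k.+1) => h' [h1' h2']; lra.
Qed.
Lemma al_ge0 k : 0 <= al k.
Proof. by rewrite /alpha; apply: divr_ge0; [apply: sumr_ge0 => i _|]; apply: ltW; exact: rb_gt0. Qed.
Lemma w_al k : w k = al k * rb k.
Proof. by []. Qed.

Lemma scale_half (c g0 Dv Z : R) : 0 < g0 -> 2 * (c * Dv) <= Z -> c * g0 * Dv <= g0 * Z / 2.
Proof. move=> hg h. have := ler_wpM2l (ltW hg) h. lra. Qed.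

Lemma step k : w k * dot (grad (xb k)) (x k.+1 - u) <=
  gy k * (d k ^+ 2 - d k.+1 ^+ 2) / 2 + rb k * sq k * bb k - gx k * (bb k ^+ 2 + aa k ^+ 2) / 2.
Proof.
set g := grad (xb k); set m := grad (zb k).
have hxk := @proj_step R n K _ _ _ _ _ cK (hx k) (Ky k.+1).
have hyk := @proj_step R n K _ _ _ _ _ cK (hy k) Ku.
have gxp := gx_gt0 k.
have gyp : 0 < gy k by apply: lt_le_trans gxp (gx_le_gy k).
have hx2 := scale_half _ _ _ _ gxp hxk.
have hy2 := scale_half _ _ _ _ gyp hyk.
have e1 : al k * (rb k / Num.sqrt (Gx k)) * gx k = w k.
  by rewrite /gx mulrA divfK // gt_eqF.
have e2 : al k * (rb k / Num.sqrt (Gy k)) * gy k = w k.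
  by rewrite /gy mulrA divfK // gt_eqF.
rewrite e1 in hx2; rewrite e2 in hy2.
rewrite -!nrm_sq -/(d k) -/(d k.+1) -/(bb k) in hx2 hy2.
rewrite (@nrmB R n (y k) (x k.+1)) -/(aa k) in hx2.
have cs1 := @cs R n (g - m) (x k.+1 - y k.+1).
rewrite -/(bb k) in cs1.
have hw := w_gt0 k.
have cs2 : w k * dot (g - m) (x k.+1 - y k.+1) <= rb k * sq k * bb k.
  have h : 0 <= al k * rb k by rewrite -w_al ltW.
  have h3 := ler_wpM2l h cs1.
  rewrite /sq w_al.
  have -> : rb k * (al k * nrm (grad (xb k) - grad (zb k))) * bb k = al k * rb k * (nrm (g - m) * bb k) by rewrite /g /m; ring.
  exact: h3.
have gle := gx_le_gy k.
have c2 := @nrm_ge0 R n (y k - y k.+1).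
have dec : dot g (x k.+1 - u) = dot g (y k.+1 - u) + dot m (x k.+1 - y k.+1) + dot (g - m) (x k.+1 - y k.+1).
  rewrite !dotBl !dotBr; ring.
rewrite dec.
have : gx k * nrm (y k - y k.+1) ^+ 2 <= gy k * nrm (y k - y k.+1) ^+ 2.
  by apply: ler_wpM2r => //; exact: sqr_ge0.
nra.
Qed.

Definition d0 := nrm (x 0%N - u).

Lemma aa_ge0 k : 0 <= aa k. Proof. exact: nrm_ge0. Qed.
Lemma bb_ge0 k : 0 <= bb k. Proof. exact: nrm_ge0. Qed.
Lemma d_ge0 k : 0 <= d k. Proof. exact: nrm_ge0. Qed.
Lemma d0_ge0 : 0 <= d0. Proof. exact: nrm_ge0. Qed.

Lemma aa_le k t : (k <= t)%N -> aa k <= 2 * rb t.+1.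
Proof.
move=> hk; rewrite /aa.
have h := @nrm_tri3 R n (x k.+1) (x 0%N) (y k).
rewrite (@nrmB R n (x 0%N) (y k)) in h.
have h1 := rb_x k.+1; have h2 := rb_y k.
have h3 : rb k.+1 <= rb t.+1 by apply: rb_mono.
have h4 : rb k <= rb t.+1 by apply: rb_mono; apply: leqW.
lra.
Qed.

Lemma bb_le k t : (k <= t)%N -> bb k <= 2 * rb t.+1.
Proof.
move=> hk; rewrite /bb.
have h := @nrm_tri3 R n (x k.+1) (x 0%N) (y k.+1).
rewrite (@nrmB R n (x 0%N) (y k.+1)) in h.
have h1 := rb_x k.+1; have h2 := rb_y k.+1.
have h3 : rb k.+1 <= rb t.+1 by apply: rb_mono.
lra.
Qed.

Lemma d_le k t : (k <= t.+1)%N -> d k <= rb t.+1 + d0.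
Proof.
move=> hk; rewrite /d /d0.
have h := @nrm_tri3 R n (y k) (x 0%N) u.
have h2 := rb_y k.
have h3 : rb k <= rb t.+1 by apply: rb_mono.
lra.
Qed.

Lemma d_sq k t : (k <= t.+1)%N -> d k ^+ 2 <= d t.+1 ^+ 2 + 4 * rb t.+1 * (rb t.+1 + d0).
Proof.
move=> hk.
have h := @nrm_tri3 R n (y k) (y t.+1) u.
have h' := @nrm_tri3 R n (y k) (x 0%N) (y t.+1).
rewrite (@nrmB R n (x 0%N) (y t.+1)) in h'.
have h1 := rb_y k; have h2 := rb_y t.+1.
have h3 : rb k <= rb t.+1 by apply: rb_mono.
have e1 := d_le k t hk; have e2 := d_le t.+1 t (leqnn t.+1).
rewrite -/(d k) -/(d t.+1) in h.
have := d_ge0 k; have := d_ge0 t.+1; have := d0_ge0; have := rb_gt0 t.+1.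
nra.
Qed.

Lemma T1bound t : \sum_(k < t.+1) gy k * (d k ^+ 2 - d k.+1 ^+ 2) / 2 <=
  2 * gy t * rb t.+1 * (rb t.+1 + d0).
Proof.
have h := @tele_c R gy (fun k => d k ^+ 2) (d t.+1 ^+ 2 + 4 * rb t.+1 * (rb t.+1 + d0)) t
  gy_S (fun k => sqrtr_ge0 _) (fun k hk => d_sq k t hk).
have e : \sum_(k < t.+1) gy k * (d k ^+ 2 - d k.+1 ^+ 2) / 2 =
  (\sum_(k < t.+1) gy k * (d k ^+ 2 - d k.+1 ^+ 2)) / 2 by rewrite mulr_suml.
rewrite e. lra.
Qed.

Notation Qp := (Qpre x y reps grad).

Lemma Qp_ge0 k : 0 <= Qp k.
Proof. by apply: sumr_ge0 => i _; apply: mulr_ge0; exact: sqr_ge0. Qed.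
Lemma Qp_rec k : Qp k.+1 = Qp k + sq k ^+ 2.
Proof. by rewrite /Qpre big_ord_recr /= /qq /sq [in RHS]exprMn. Qed.
Lemma Qp0 : Qp 0 = 0.
Proof. by rewrite /Qpre big_ord0. Qed.

Lemma sq_ge0 k : 0 <= sq k.
Proof. by apply: mulr_ge0; [exact: al_ge0 | exact: nrm_ge0]. Qed.

Lemma sq_smooth (beta : R) k : smooth_on K grad beta -> 0 <= beta -> sq k <= 2 * beta * aa k.
Proof.
move=> hs b0.
have h := hs _ _ (Kxb k) (Kzb k).
rewrite xb_zb nrmZ ger0_norm in h; last by apply: divr_ge0; apply: ltW; [exact: w_gt0 | exact: W_gt0].
rewrite -/(aa k) in h.
have aw : al k * w k <= 2 * W k.
  have := S2_W k. rewrite /alpha -/(S k) w_S.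
  have := rb_gt0 k; have := S_gt0 k; move=> h1 h2.
  move=> hh; rewrite mulrAC ler_pdivrMr //; nra.
have := ler_wpM2l (al_ge0 k) h.
rewrite /sq => h2; apply: le_trans h2 _.
have hW := W_gt0 k.
have ha := aa_ge0 k.
have -> : al k * (beta * (w k / W k * aa k)) = beta * aa k * ((al k * w k) / W k) by rewrite mulrA; field; rewrite gt_eqF.
have : al k * w k / W k <= 2 by rewrite ler_pdivrMr.
have : 0 <= beta * aa k by exact: mulr_ge0.
nra.
Qed.

Hypothesis hQ : forall t, Qp t <= Gx t.

Definition E k := rb k * sq k * bb k - gx k * (bb k ^+ 2 + aa k ^+ 2) / 2.
Definition pp k := Num.sqrt (Qp k).

Lemma pp_ge0 k : 0 <= pp k. Proof. exact: sqrtr_ge0. Qed.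
Lemma pp_rec k : pp k.+1 ^+ 2 = pp k ^+ 2 + sq k ^+ 2.
Proof. by rewrite /pp !sqr_sqrtr ?Qp_ge0 // Qp_rec. Qed.
Lemma pp_gx k : pp k <= gx k.
Proof. by rewrite /pp /gx ler_sqrt; [exact: hQ | case: (hG k) => h _; exact: ltW]. Qed.
Lemma pp0 : pp 0 = 0.
Proof. by rewrite /pp Qp0 sqrtr0. Qed.

Lemma EsumA t : \sum_(k < t.+1) E k <= 6 * rb t.+1 ^+ 2 * pp t.+1.
Proof.
have -> : 6 * rb t.+1 ^+ 2 * pp t.+1 = \sum_(k < t.+1) (6 * rb t.+1 ^+ 2 * (pp k.+1 - pp k)).
  by rewrite -mulr_sumr (@tele_sum R pp t) pp0 subr0.
apply: ler_sum => [[k hk]] _ /=.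
have hkt : (k <= t)%N by rewrite -ltnS.
have h := @stepA R (rb k) (rb t.+1) (sq k) (bb k) (gx k) (pp k) (pp k.+1) (rb_gt0 k)
  (rb_mono k t.+1 (leqW hkt)) (bb_ge0 k) (bb_le k t hkt) (sq_ge0 k) (gx_gt0 k) (pp_ge0 k) (pp_ge0 k.+1)
  (pp_rec k) (pp_gx k).
apply: le_trans h; rewrite /E.
have : 0 <= gx k * aa k ^+ 2 by apply: mulr_ge0; [exact: ltW (gx_gt0 k) | exact: sqr_ge0].
lra.
Qed.

Lemma EsumB t (beta c4 lam : R) : smooth_on K grad beta -> 0 <= beta -> 0 <= c4 -> 0 <= lam ->
  8 * beta ^+ 2 * (6 * rb t.+1 ^+ 2 + c4) <= lam ^+ 2 ->
  \sum_(k < t.+1) E k + c4 * pp t.+1 <= (6 * rb t.+1 ^+ 2 + c4) * (lam + 4 * beta * rb t.+1).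
Proof.
move=> hs b0 c40 l0 hl.
set L := lam + 4 * beta * rb t.+1.
have L0 : 0 <= L by rewrite /L; have := rb_gt0 t.+1; nra.
have -> : \sum_(k < t.+1) E k + c4 * pp t.+1 = \sum_(k < t.+1) (E k + c4 * (pp k.+1 - pp k)).
  by rewrite [RHS]big_split /= -mulr_sumr (@tele_sum R pp t) pp0 subr0.
apply: le_trans (_ : \sum_(k < t.+1) ((6 * rb t.+1 ^+ 2 + c4) *
   (Num.min (pp k.+1) L - Num.min (pp k) L)) <= _).
  apply: ler_sum => [[k hk]] _ /=.
  have hkt : (k <= t)%N by rewrite -ltnS.
  exact: (@stepB R (rb k) (rb t.+1) (sq k) (bb k) (gx k) (pp k) (pp k.+1) (aa k) beta c4 lam (rb_gt0 k)
  (rb_mono k t.+1 (leqW hkt)) (bb_ge0 k) (bb_le k t hkt) (sq_ge0 k) (gx_gt0 k) (pp_ge0 k) (pp_ge0 k.+1)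
  (pp_rec k) (pp_gx k) (aa_ge0 k) (aa_le k t hkt) b0 (sq_smooth beta k hs b0) c40 l0 hl).
rewrite -mulr_sumr (@tele_sum R (fun k => Num.min (pp k) L) t) /= pp0.
apply: ler_wpM2l; first by have := rb_gt0 t.+1; nra.
rewrite (min_l L0) subr0; by rewrite ge_min lexx orbT.
Qed.

Definition Reg t := \sum_(k < t.+1) w k * dot (grad (xb k)) (x k.+1 - u).

Lemma Reg_bound t : Reg t <= 2 * gy t * rb t.+1 * (rb t.+1 + d0) + \sum_(k < t.+1) E k.
Proof.
apply: le_trans (_ : \sum_(k < t.+1) (gy k * (d k ^+ 2 - d k.+1 ^+ 2) / 2 + E k) <= _).
  apply: ler_sum => k _; rewrite /E; have := step k; lra.
rewrite big_split /=; have := T1bound t; lra.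
Qed.

Lemma Reg_main t (s beta : R) : 0 <= s -> (s = 0 \/ smooth_on K grad beta) -> 0 <= beta ->
  Reg t <= 320 * rb t.+1 * (s * Num.sqrt s * beta * (rb t.+1 + d0) ^+ 2 +
     (rb t.+1 + d0) * Num.max 0 (Num.sqrt (Num.max (Gy t) (Qp t.+1)) - s * pp t.+1)).
Proof.
move=> s0 hs b0.
set r := rb t.+1; set D := r + d0; set sQ := pp t.+1.
set sM := Num.sqrt (Num.max (Gy t) (Qp t.+1)).
have r0 : 0 < r := rb_gt0 t.+1.
have hD : r <= D by rewrite /D; have := d0_ge0; lra.
have M0 : 0 <= Num.max (Gy t) (Qp t.+1).
  by apply: le_trans (Qp_ge0 t.+1) _; rewrite le_max lexx orbT.
have gyM : gy t <= sM by rewrite /gy /sM ler_sqrt // le_max lexx.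
have sQM : sQ <= sM by rewrite /sQ /pp /sM ler_sqrt // le_max lexx orbT.
have sQ0 : 0 <= sQ := pp_ge0 _.
have gy0 : 0 <= gy t := sqrtr_ge0 _.
have hR := Reg_bound t.
rewrite -/r -/D in hR.
have ss0 : 0 <= Num.sqrt s := sqrtr_ge0 _.
have X1 : 0 <= s * Num.sqrt s * beta * D ^+ 2.
  apply: mulr_ge0; last exact: sqr_ge0. apply: mulr_ge0 => //; exact: mulr_ge0.
have mx0 : 0 <= Num.max 0 (sM - s * sQ) by rewrite le_max lexx.
have Dm0 : 0 <= D * Num.max 0 (sM - s * sQ) by apply: mulr_ge0 => //; lra.
have [c1|c2] := lerP (2 * s * sQ) sM.
  have hA := EsumA t; rewrite -/r -/sQ in hA.
  have m2 : sM / 2 <= Num.max 0 (sM - s * sQ) by rewrite le_max; apply/orP; right; lra.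
  have k1 : 2 * gy t * r * D <= 2 * sM * r * D.
    by apply: ler_wpM2r; [lra | apply: ler_wpM2r; [lra | lra]].
  have k2 : 6 * r ^+ 2 * sQ <= 6 * (r * D) * sM.
    apply: ler_pM; [nra | lra | nra | lra].
  have k3 : r * D * sM <= 2 * (r * (D * Num.max 0 (sM - s * sQ))).
    rewrite mulrA; have rD : 0 <= r * D by nra.
    have := ler_wpM2l rD m2; lra.
  have k4 : 0 <= r * (s * Num.sqrt s * beta * D ^+ 2) by apply: mulr_ge0; lra.
  have k5 : 0 <= r * (D * Num.max 0 (sM - s * sQ)) by apply: mulr_ge0; lra.
  rewrite mulrDr; lra.
have sQp : 0 < sQ.
  rewrite lt_neqAle sQ0 andbT; apply/negP => /eqP e; rewrite -e mulr0 in c2.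
  have : 0 <= sM := sqrtr_ge0 _. lra.
have shalf : 1 / 2 < s.
  have : sQ < 2 * s * sQ by lra.
  move=> h; rewrite ltr_pdivrMr //; nra.
have sm : smooth_on K grad beta by case: hs => // e; move: shalf; rewrite e; lra.
set sg := Num.sqrt s.
have sg2 : sg ^+ 2 = s by rewrite /sg sqr_sqrtr.
have sg0 : 0 <= sg := sqrtr_ge0 _.
have sgh : 1 / 2 <= sg.
  rewrite leNgt; apply/negP => h. have : sg ^+ 2 < 1 / 4.
    have : sg * sg < 1/2 * (1/2) by apply: ltr_pM => //.
    by rewrite expr2; lra.
  lra.
have hB := EsumB t beta (4 * s * r * D) (12 * beta * sg * D) sm b0.
rewrite -/r -/sQ in hB.
have A16 : 6 * r ^+ 2 + 4 * s * r * D <= 16 * sg ^+ 2 * (r * D).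
  have : r ^+ 2 <= r * D by rewrite expr2; apply: ler_wpM2l; lra.
  have : 1 / 4 <= sg ^+ 2 by rewrite -sg2 in shalf; lra.
  rewrite -sg2; nra.
have A16' : 6 * r ^+ 2 + 4 * s * r * D <= 16 * sg ^+ 2 * D ^+ 2.
  apply: le_trans A16 _; apply: ler_wpM2l; first by nra.
  by rewrite expr2; apply: ler_wpM2r; lra.
have hl : 8 * beta ^+ 2 * (6 * r ^+ 2 + 4 * s * r * D) <= (12 * beta * sg * D) ^+ 2.
  have b2 : 0 <= beta ^+ 2 := sqr_ge0 _.
  have := ler_wpM2l b2 A16'.
  have : 0 <= beta ^+ 2 * (sg ^+ 2 * D ^+ 2) by apply: mulr_ge0 => //; apply: mulr_ge0; exact: sqr_ge0.
  have -> : (12 * beta * sg * D) ^+ 2 = 144 * (beta ^+ 2 * (sg ^+ 2 * D ^+ 2)) by ring.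
  have -> : beta ^+ 2 * (16 * sg ^+ 2 * D ^+ 2) = 16 * (beta ^+ 2 * (sg ^+ 2 * D ^+ 2)) by ring.
  lra.
have c40 : 0 <= 4 * s * r * D by apply: mulr_ge0; [apply: mulr_ge0 |]; lra.
have l0 : 0 <= 12 * beta * sg * D by apply: mulr_ge0; [apply: mulr_ge0 => //; apply: mulr_ge0 |]; lra.
have hB2 := hB c40 l0 hl.
have lam' : 12 * beta * sg * D + 4 * beta * r <= 20 * beta * sg * D.
  have : 4 * r <= 8 * sg * D by nra.
  nra.
have A0 : 0 <= 6 * r ^+ 2 + 4 * s * r * D by have := sqr_ge0 r; lra.
have Al : (6 * r ^+ 2 + 4 * s * r * D) * (12 * beta * sg * D + 4 * beta * r)
   <= 16 * sg ^+ 2 * (r * D) * (20 * beta * sg * D).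
  apply: ler_pM => //; have := sqr_ge0 r; nra.
have k1 : 2 * gy t * r * D <= 4 * s * r * D * sQ.
  have : gy t <= 2 * s * sQ by lra.
  move=> h; have rD : 0 <= r * D by nra.
  have := ler_wpM2l rD h. 
  have -> : 2 * gy t * r * D = 2 * (r * D * gy t) by ring.
  have -> : 4 * s * r * D * sQ = 2 * (r * D * (2 * s * sQ)) by ring.
  lra.
have e : s * Num.sqrt s * beta * D ^+ 2 = sg ^+ 3 * beta * D ^+ 2 by rewrite -/sg -sg2; ring.
rewrite e in X1 *.
have fin : 16 * sg ^+ 2 * (r * D) * (20 * beta * sg * D) = 320 * r * (sg ^+ 3 * beta * D ^+ 2) by ring.
have k5 : 0 <= r * (D * Num.max 0 (sM - s * sQ)) by apply: mulr_ge0; lra.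
rewrite mulrDr.
have : 0 <= 320 * r * (D * Num.max 0 (sM - s * sQ)) by rewrite -mulrA; apply: mulr_ge0 => //.
lra.
Qed.

Lemma final t (s beta : R) : 0 <= s -> (s = 0 \/ smooth_on K grad beta) -> 0 <= beta ->
  f (xb t) - f u <= 1000 * (s * Num.sqrt s * beta * (rb t.+1 + d0) ^+ 2 +
     (rb t.+1 + d0) * Num.max 0 (Num.sqrt (Num.max (Gy t) (Qp t.+1)) - s * Num.sqrt (Qp t.+1)))
   / ((\sum_(k < t.+1) rb k) / rb t.+1) ^+ 2.
Proof.
move=> s0 hs b0.
have hR := Reg_main t s beta s0 hs b0.
have ho := otb t.
rewrite -/(Reg t) in ho.
rewrite -/(S t).
set X := (s * Num.sqrt s * beta * (rb t.+1 + d0) ^+ 2 +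
     (rb t.+1 + d0) * Num.max 0 (Num.sqrt (Num.max (Gy t) (Qp t.+1)) - s * Num.sqrt (Qp t.+1))).
rewrite -/X in hR.
set r := rb t.+1 in hR *.
set F := f (xb t) - f u in ho *.
have r0 : 0 < r := rb_gt0 t.+1.
have S0 := S_gt0 t.
have W0 := W_gt0 t.
have SW : S t ^+ 2 <= 2 * r * W t.
  apply: le_trans (S2_W t) _; apply: ler_wpM2r; first exact: ltW.
  have := rb_S t; rewrite -/r; lra.
have X0 : 0 <= X.
  have D0 : 0 <= r + d0 by have := d0_ge0; lra.
  apply: addr_ge0.
    apply: mulr_ge0; last exact: sqr_ge0.
    by apply: mulr_ge0 => //; apply: mulr_ge0 => //; exact: sqrtr_ge0.
  by apply: mulr_ge0 => //; rewrite le_max lexx.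
exact: (@final_scalar R F (W t) (S t) r X (Reg t) r0 S0 W0 SW X0 ho hR).
Qed.

End Main.

Theorem proposition3 :
  exists C : rat, 0 < C /\
  forall (R : realType) (n : nat) (K : set 'rV[R]_n)
    (f : 'rV[R]_n -> R) (grad : 'rV[R]_n -> 'rV[R]_n) (beta : R)
    (xstar : 'rV[R]_n) (reps : R)
    (x y : nat -> 'rV[R]_n) (Gx Gy : nat -> R),
    closed K -> convex_set K ->
    convex_on K f -> is_subgrad_on K f grad -> 0 <= beta ->
    is_minimizer K f xstar ->
    0 < reps ->
    K (x 0%N) -> y 0%N = x 0%N ->
    (forall t, 0 < Gx t /\ Gx t <= Gy t /\ Gy t <= Gx t.+1) ->
    (forall t, is_proj K
       (y t - (alpha x y reps t * (rbar x y reps t / Num.sqrt (Gx t)))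
                *: grad (zbar x y reps t))
       (x t.+1)) ->
    (forall t, is_proj K
       (y t - (alpha x y reps t * (rbar x y reps t / Num.sqrt (Gy t)))
                *: grad (xbar x y reps t))
       (y t.+1)) ->
    (forall t, Qpre x y reps grad t <= Gx t) ->
    forall (t : nat) (s : R), 0 <= s ->
    (s = 0 \/ smooth_on K grad beta) ->
    let D := rbar x y reps t.+1 + enorm (x 0%N - xstar) in
    let Qt := Qpre x y reps grad t.+1 in
    f (xbar x y reps t) - f xstar <=
      ratr C *
      (s * Num.sqrt s * beta * D ^+ 2
       + D * Num.max 0 (Num.sqrt (Num.max (Gy t) Qt) - s * Num.sqrt Qt))
      / ((\sum_(k < t.+1) rbar x y reps k) / rbar x y reps t.+1) ^+ 2.
Proof.
exists (1000%:R); split; first by rewrite ltr0n.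
move=> R n K f grad beta xstar reps x y Gx Gy _ cK _ hsub b0 [Ku _] reps0 Kx0 y0 hG hx hy hQ t s s0 hs.
rewrite ratr_nat.
exact: (@final R n x y reps reps0 K f grad Gx Gy xstar cK hsub Ku Kx0 y0 hG hx hy hQ t s beta s0 hs b0).
Qed.
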